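(* Let $(X,d)$ be a $\delta$-hyperbolic space and $\Gamma$ a group acting properly by isometries on $X$, with $\operatorname{diam}(\Gamma\backslash X)\le D$ and $\operatorname{Ent}(X,d)\le H$. Then for every $x\in X$ and every $R\ge 10(D+2\delta)$, $$\frac{\#\{\gamma\in\Gamma:d(x,\gamma x)<2R\}}{\#\{\gamma\in\Gamma:d(x,\gamma x)<R\}}\ \le\ 3^4e^{\frac{13}{2}HR}.$$
   Context: A $\delta$-hyperbolic space is a geodesic proper metric space all of whose geodesic triangles are $\delta$-thin (for a triangle $\Delta$ with vertices $x,y,z$, its tripod $T_\Delta$ has edges of lengths $(y|z)_x,(x|z)_y,(x|y)_z$ where $(y|z)_x=\frac12(d(x,y)+d(x,z)-d(y,z))$; the map $f_\Delta:\Delta\to T_\Delta$ is isometric on each side and sends vertices to ends; $\delta$-thin means $f_\Delta(u)=f_\Delta(v)\Rightarrow d(u,v)\le\delta$). A proper action: $\{\gamma: d(x,\gamma x)\le R\}$ finite for all $x,R$. $\Gamma\backslash X$ carries the quotient distance $\bar d(\Gamma x,\Gamma y)=\inf_\gamma d(x,\gamma y)$. $\operatorname{Ent}(X,d)=\liminf_{R\to\infty}\frac1R\ln\#\{\gamma\in\Gamma:d(x,\gamma x)<R\}$. *)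

(* Defs.v *)
From Stdlib Require Export Reals Lra List.
Open Scope R_scope.

Definition IsMetric {X : Type} (d : X -> X -> R) : Prop :=
  (forall x y, 0 <= d x y) /\
  (forall x y, d x y = 0 <-> x = y) /\
  (forall x y, d x y = d y x) /\
  (forall x y z, d x z <= d x y + d y z).

Definition IsGeodesic {X : Type} (d : X -> X -> R) (a b : X) (c : R -> X) : Prop :=
  c 0 = a /\ c (d a b) = b /\
  forall s t, 0 <= s <= d a b -> 0 <= t <= d a b -> d (c s) (c t) = Rabs (s - t).

Definition Geodesic {X : Type} (d : X -> X -> R) : Prop :=
  forall a b, exists c, IsGeodesic d a b c.

(* proper: closed balls are (sequentially) compact *)
Definition Proper {X : Type} (d : X -> X -> R) : Prop :=
  forall (x0 : X) (r : R) (u : nat -> X),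
    (forall n, d x0 (u n) <= r) ->
    exists (phi : nat -> nat) (l : X),
      (forall n, (phi n < phi (S n))%nat) /\
      forall eps, eps > 0 -> exists N, forall n, (n >= N)%nat -> d (u (phi n)) l < eps.

Definition gromov {X : Type} (d : X -> X -> R) (x y z : X) : R :=
  (d x y + d x z - d y z) / 2.

(* The geodesic triangle with vertices x y z and sides cxy : x -> y,
   cxz : x -> z, cyz : y -> z is delta-thin: two points with the same image
   under the tripod map f_Delta are at distance <= delta.  Points on the
   same side have the same image only if they coincide (f is isometric on
   each side); points on two different sides have the same image iff they
   lie at the same distance t <= (Gromov product) from the common vertex. *)
Definition ThinTriangle {X : Type} (d : X -> X -> R) (delta : R)
  (x y z : X) (cxy cxz cyz : R -> X) : Prop :=
  (forall t, 0 <= t <= gromov d x y z -> d (cxy t) (cxz t) <= delta) /\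
  (forall t, 0 <= t <= gromov d y x z ->
       d (cxy (d x y - t)) (cyz t) <= delta) /\
  (forall t, 0 <= t <= gromov d z x y ->
       d (cxz (d x z - t)) (cyz (d y z - t)) <= delta).

Definition Hyperbolic {X : Type} (d : X -> X -> R) (delta : R) : Prop :=
  IsMetric d /\ Geodesic d /\ Proper d /\
  forall x y z cxy cxz cyz,
    IsGeodesic d x y cxy -> IsGeodesic d x z cxz -> IsGeodesic d y z cyz ->
    ThinTriangle d delta x y z cxy cxz cyz.

Definition IsGroup {G : Type} (mul : G -> G -> G) (inv : G -> G) (e : G) : Prop :=
  (forall a b c, mul a (mul b c) = mul (mul a b) c) /\
  (forall a, mul e a = a /\ mul a e = a) /\
  (forall a, mul (inv a) a = e /\ mul a (inv a) = e).

Definition IsometricAction {G X : Type} (mul : G -> G -> G) (e : G)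
  (d : X -> X -> R) (act : G -> X -> X) : Prop :=
  (forall x, act e x = x) /\
  (forall g h x, act (mul g h) x = act g (act h x)) /\
  (forall g x y, d (act g x) (act g y) = d x y).

Definition HasCard {G : Type} (P : G -> Prop) (n : nat) : Prop :=
  exists l : list G, NoDup l /\ length l = n /\ forall g, In g l <-> P g.

Definition ProperAction {G X : Type} (d : X -> X -> R) (act : G -> X -> X) : Prop :=
  forall x r, exists n, HasCard (fun g => d x (act g x) <= r) n.

(* diam(Gamma \ X) <= D for the quotient distance
   dbar(Gx, Gy) = inf_g d(x, g y) *)
Definition QuotDiamLe {G X : Type} (d : X -> X -> R) (act : G -> X -> X) (D : R) : Prop :=
  forall x y eps, eps > 0 -> exists g, d x (act g y) < D + eps.

(* Ent(X,d) = liminf_{r -> oo} (1/r) ln #{g | d(x, g x) < r} <= H,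
   i.e. for every eps > 0 there are arbitrarily large r with
   (1/r) ln N(r) <= H + eps. *)
Definition EntLe {G X : Type} (d : X -> X -> R) (act : G -> X -> X) (x : X) (H : R) : Prop :=
  forall eps r0, eps > 0 -> exists r n, r >= r0 /\ r > 0 /\
    HasCard (fun g => d x (act g x) < r) n /\ ln (INR n) / r <= H + eps.

(* Main.v *)
Require Import Defs.
From Stdlib Require Import Reals List Lra Lia ZArith ClassicalEpsilon.
Open Scope R_scope.

Lemma filter_split {A} (f : A -> bool) (l : list A) :
  length l = (length (filter f l) + length (filter (fun y => negb (f y)) l))%nat.
Proof.
  induction l as [|a l IH]; simpl; auto.
  destruct (f a); simpl; lia.
Qed.

Lemma NoDup_prod {A B} (l1 : list A) (l2 : list B) :
  NoDup l1 -> NoDup l2 -> NoDup (list_prod l1 l2).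
Proof.
  intros H1 H2; induction H1 as [|a l1 Ha H1 IH]; simpl; [constructor|].
  apply NoDup_app; auto.
  - apply NoDup_map_NoDup_ForallPairs; auto.
    intros y z _ _ E; inversion E; auto.
  - intros p Hp Hp'. apply in_map_iff in Hp as [y [<- _]].
    apply in_prod_iff in Hp' as [Hc _]. contradiction.
Qed.

Lemma filter_prod_len {A B} (f : A -> B -> bool) (l1 : list A) (l2 : list B) m :
  (forall a, In a l1 -> (m <= length (filter (f a) l2))%nat) ->
  (length l1 * m <= length (filter (fun p => f (fst p) (snd p)) (list_prod l1 l2)))%nat.
Proof.
  induction l1 as [|a l1 IH]; intros Hm; simpl; [lia|].
  rewrite filter_app, length_app.
  assert (E : length (filter (fun p : A * B => f (fst p) (snd p)) (map (fun y => (a, y)) l2))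
              = length (filter (f a) l2)).
  { clear. induction l2 as [|b l2 IH]; simpl; auto. destruct (f a b); simpl; auto. }
  rewrite E. specialize (IH (fun a' H => Hm a' (or_intror H))).
  specialize (Hm a (or_introl eq_refl)). lia.
Qed.

Lemma card_le {G} (P Q : G -> Prop) n m :
  HasCard P n -> HasCard Q m -> (forall g, P g -> Q g) -> (n <= m)%nat.
Proof.
  intros [l [Hl [<- Hl']]] [k [Hk [<- Hk']]] HPQ.
  apply NoDup_incl_length; auto. intros g Hg. apply Hk', HPQ, Hl'; auto.
Qed.

Lemma ln_le' a b : 0 < a -> a <= b -> ln a <= ln b.
Proof.
  intros Ha Hab. destruct (Rle_lt_or_eq_dec _ _ Hab) as [Hl|He].
  - left; apply ln_increasing; auto.
  - subst; lra.
Qed.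

Lemma floor_ex (y : R) : 0 <= y -> exists k : nat, INR k <= y < INR k + 1.
Proof.
  intros Hy. destruct (base_Int_part y) as [H1 H2].
  set (z := Int_part y) in *.
  assert (Hz : (0 <= z)%Z).
  { assert (Hz' : (-1 < z)%Z) by (apply lt_IZR; simpl; lra). lia. }
  exists (Z.to_nat z). rewrite INR_IZR_INZ, Z2Nat.id by auto. lra.
Qed.


Lemma grp_cancel1 {G} (mul : G -> G -> G) inv e : IsGroup mul inv e ->
  forall g a, mul g (mul (inv g) a) = a.
Proof. intros [As [Id Iv]] g a. rewrite As. destruct (Iv g) as [_ ->]. apply Id. Qed.

Lemma grp_cancel2 {G} (mul : G -> G -> G) inv e : IsGroup mul inv e ->
  forall g a, mul (inv g) (mul g a) = a.
Proof. intros [As [Id Iv]] g a. rewrite As. destruct (Iv g) as [-> _]. apply Id. Qed.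

Lemma act_inv1 {G X} (mul : G -> G -> G) inv e d (act : G -> X -> X) :
  IsGroup mul inv e -> IsometricAction mul e d act -> forall g y, act g (act (inv g) y) = y.
Proof. intros [As [Id Iv]] [A1 [A2 A3]] g y. rewrite <- A2. destruct (Iv g) as [_ ->]. apply A1. Qed.

Lemma act_inv2 {G X} (mul : G -> G -> G) inv e d (act : G -> X -> X) :
  IsGroup mul inv e -> IsometricAction mul e d act -> forall g y, act (inv g) (act g y) = y.
Proof. intros [As [Id Iv]] [A1 [A2 A3]] g y. rewrite <- A2. destruct (Iv g) as [-> _]. apply A1. Qed.

Lemma dist_inv {G X} (mul : G -> G -> G) inv e d (act : G -> X -> X) :
  IsGroup mul inv e -> IsometricAction mul e d act ->
  forall g y z, d y (act (inv g) z) = d (act g y) z.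
Proof.
  intros Hg Ha g y z. destruct Ha as [A1 [A2 A3]] eqn:E.
  rewrite <- (A3 g y (act (inv g) z)). rewrite (act_inv1 mul inv e d act Hg (conj A1 (conj A2 A3))). auto.
Qed.

Lemma gromov_bounds {X} (d : X -> X -> R) x y z : IsMetric d ->
  0 <= gromov d x y z /\ gromov d x y z <= d x y /\ gromov d x y z <= d x z.
Proof.
  intros [M1 [M2 [M3 M4]]]. unfold gromov.
  pose proof (M4 y x z). pose proof (M4 x y z). pose proof (M4 x z y).
  pose proof (M3 x y). pose proof (M3 y z). lra.
Qed.

Lemma geod_pt {X} (d : X -> X -> R) a b c s : IsMetric d -> IsGeodesic d a b c ->
  0 <= s <= d a b -> d a (c s) = s /\ d (c s) b = d a b - s.
Proof.
  intros [M1 [M2 [M3 M4]]] [C0 [C1 C2]] Hs.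
  pose proof (M1 a b).
  split.
  - rewrite <- C0 at 1. rewrite C2 by lra. unfold Rabs; destruct Rcase_abs; lra.
  - rewrite <- C1 at 1. rewrite C2 by lra. unfold Rabs; destruct Rcase_abs; lra.
Qed.

Lemma geod_dist {X} (d : X -> X -> R) a b c s t : IsGeodesic d a b c ->
  0 <= s <= d a b -> 0 <= t <= d a b -> d (c s) (c t) = Rabs (s - t).
Proof. intros [_ [_ C2]]; auto. Qed.

Lemma bad_lemma {X G} (d : X -> X -> R) delta D (act : G -> X -> X) :
  Hyperbolic d delta -> QuotDiamLe d act D ->
  forall x u C0 eps0, 0 <= C0 -> eps0 > 0 ->
  exists g, forall y, gromov d x u y > C0 ->
     d (act g x) y < D + eps0 + delta + d x y - C0.
Proof.
  intros [Hm [Hgeo [_ Hthin]]] HQ x u C0 eps0 HC He.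
  destruct (Hgeo x u) as [cu Hcu].
  destruct (HQ (cu C0) x eps0 He) as [g Hg].
  exists g. intros y Hy.
  destruct (Hgeo x y) as [cy Hcy]. destruct (Hgeo u y) as [cuy Hcuy].
  destruct (Hthin x u y cu cy cuy Hcu Hcy Hcuy) as [T1 _].
  destruct (gromov_bounds d x u y Hm) as [B1 [B2 B3]].
  specialize (T1 C0 ltac:(lra)).
  destruct (geod_pt d x y cy C0 Hm Hcy ltac:(lra)) as [_ P2].
  destruct Hm as [M1 [M2 [M3 M4]]].
  pose proof (M4 (act g x) (cu C0) y). pose proof (M4 (cu C0) (cy C0) y).
  rewrite (M3 (act g x) (cu C0)) in *. lra.
Qed.

Lemma fiber_lemma {X G} (d : X -> X -> R) delta D (act : G -> X -> X) :
  Hyperbolic d delta -> QuotDiamLe d act D ->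
  forall x z t l C0 eps0, 0 <= C0 -> 0 <= l -> eps0 > 0 ->
  exists g, forall y, (d x y + d y z - d x z) / 2 <= C0 -> t <= d y z < t + l ->
     d y (act g x) < C0 + l / 2 + delta + D + eps0.
Proof.
  intros [Hm [Hgeo [_ Hthin]]] HQ x z t l C0 eps0 HC Hl He.
  destruct (Hgeo x z) as [c Hc].
  set (tc := Rmax 0 (Rmin (d x z) (d x z - t + C0 - l / 2))).
  assert (HW : 0 <= d x z) by (apply Hm).
  assert (Htc : 0 <= tc <= d x z).
  { unfold tc, Rmax, Rmin. repeat destruct Rle_dec; lra. }
  destruct (HQ (c tc) x eps0 He) as [g Hg].
  exists g. intros y HG Hb.
  destruct (Hgeo x y) as [c1 Hc1]. destruct (Hgeo y z) as [c2 Hc2].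
  destruct (Hthin x y z c1 c c2 Hc1 Hc Hc2) as [T1 _].
  destruct (gromov_bounds d x y z Hm) as [B1 [B2 B3]].
  set (tau := gromov d x y z) in *.
  specialize (T1 tau ltac:(lra)).
  destruct (geod_pt d x y c1 tau Hm Hc1 ltac:(lra)) as [_ P2].
  pose proof (geod_dist d x z c tau tc Hc ltac:(lra) ltac:(lra)) as P3.
  assert (Hab : Rabs (tau - tc) + (d x y - tau) <= C0 + l / 2).
  { assert (Etau : tau = (d x y + d x z - d y z) / 2) by reflexivity.
    destruct (gromov_bounds d y x z Hm) as [G1 _]. unfold gromov in G1.
    destruct Hm as [M1 [M2 [M3 M4]]]. rewrite (M3 y x) in G1.
    unfold tc, Rmax, Rmin, Rabs; repeat destruct Rle_dec; destruct Rcase_abs; lra. }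
  destruct Hm as [M1 [M2 [M3 M4]]].
  pose proof (M4 y (c1 tau) (act g x)).
  pose proof (M4 (c1 tau) (c tau) (act g x)).
  pose proof (M4 (c tau) (c tc) (act g x)).
  rewrite (M3 y (c1 tau)) in *. lra.
Qed.

Lemma ball_exists {X G} (d : X -> X -> R) (act : G -> X -> X) :
  ProperAction d act -> forall x T, exists n, HasCard (fun g => d x (act g x) < T) n.
Proof.
  intros HP x T. destruct (HP x T) as [n [l [Hl [_ Hl']]]].
  set (f := fun g => if Rlt_dec (d x (act g x)) T then true else false).
  exists (length (filter f l)), (filter f l). split; [apply NoDup_filter; auto|split; auto].
  intros g. rewrite filter_In. unfold f. destruct Rlt_dec as [H|H]; split; intros HH.
  - auto.
  - split; auto. apply Hl'. lra.
  - destruct HH; discriminate.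
  - contradiction.
Qed.

Lemma card_pos {X G} (d : X -> X -> R) (mul : G -> G -> G) e (act : G -> X -> X) :
  IsMetric d -> IsometricAction mul e d act ->
  forall x T n, T > 0 -> HasCard (fun g => d x (act g x) < T) n -> (1 <= n)%nat.
Proof.
  intros [M1 [M2 _]] [A1 _] x T n HT [l [_ [<- Hl]]].
  assert (In e l). { apply Hl. rewrite A1. assert (d x x = 0) by (apply M2; auto). lra. }
  destruct l; simpl in *; [contradiction|lia].
Qed.

Lemma recursion {X G} (d : X -> X -> R) delta D (mul : G -> G -> G) inv e (act : G -> X -> X) :
  Hyperbolic d delta -> IsGroup mul inv e -> IsometricAction mul e d act -> QuotDiamLe d act D ->
  forall x r t, r > 0 -> 0 <= D -> 0 <= delta -> 10 * (D + 2 * delta) <= r -> r <= t ->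
  forall s s' tl ns nsL nt ntl, tl = t + r / 4 -> s' = s + tl ->
  HasCard (fun g => d x (act g x) < s) ns ->
  HasCard (fun g => d x (act g x) < s') nsL ->
  HasCard (fun g => d x (act g x) < t) nt ->
  HasCard (fun g => d x (act g x) < tl) ntl ->
  (ns * ntl <= nsL * nt + 2 * (ns * nt))%nat.
Proof.
  intros Hhyp Hgrp Hact HQ x r t Hr HD Hd Hrr Ht s s' tl ns nsL nt ntl Etl Es'
    [La [HLa [<- HLa']]] [Ls [HLs [<- HLs']]] [Lt [HLt [<- HLt']]] [Ltl [HLtl [<- HLtl']]].
  pose proof Hhyp as [Hm _].
  pose proof Hm as [M1 [M2 [M3 M4]]].
  pose proof Hact as [A1 [A2 A3]].
  set (eps0 := r / 10). set (C0 := r / 4 + D + delta + eps0).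
  set (good := fun a b => if Rle_dec t (d x (act b x)) then
                 if Rle_dec (gromov d x (act (inv a) x) (act b x)) C0 then true else false
               else false).
  assert (Hper : forall a, (length Ltl - 2 * length Lt <= length (filter (good a) Ltl))%nat).
  { intros a.
    destruct (bad_lemma d delta D act Hhyp HQ x (act (inv a) x) C0 eps0
                ltac:(unfold C0, eps0; lra) ltac:(unfold eps0; lra)) as [g Hg].
    assert (Hinc : incl (filter (fun y => negb (good a y)) Ltl) (Lt ++ map (mul g) Lt)).
    { intros b Hb. apply filter_In in Hb as [Hb1 Hb2]. apply HLtl' in Hb1. apply in_or_app.
      unfold good in Hb2. destruct Rle_dec as [H1|H1].
      - destruct Rle_dec as [H2|H2]; [discriminate|]. right. apply in_map_iff.
        exists (mul (inv g) b). split; [apply (grp_cancel1 mul inv e Hgrp)|]. apply HLt'.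
        rewrite A2. rewrite (dist_inv mul inv e d act Hgrp Hact).
        specialize (Hg (act b x) ltac:(lra)). unfold C0 in Hg. lra.
      - left. apply HLt'. lra. }
    pose proof (NoDup_incl_length (NoDup_filter _ HLtl) Hinc) as HH.
    rewrite length_app, length_map in HH. pose proof (filter_split (good a) Ltl). lia. }
  assert (Hfib : forall w, exists g, forall y,
             (d x y + d y (act w x) - d x (act w x)) / 2 <= C0 ->
             t <= d y (act w x) < t + r / 4 ->
             d y (act g x) < C0 + r / 4 / 2 + delta + D + eps0).
  { intros w. apply (fiber_lemma d delta D act Hhyp HQ); unfold C0, eps0; lra. }
  assert (Hgw : exists gw : G -> G, forall w y,
             (d x y + d y (act w x) - d x (act w x)) / 2 <= C0 ->
             t <= d y (act w x) < t + r / 4 ->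
             d y (act (gw w) x) < C0 + r / 4 / 2 + delta + D + eps0).
  { exists (fun w => proj1_sig (constructive_indefinite_description _ (Hfib w))).
    intros w. exact (proj2_sig (constructive_indefinite_description _ (Hfib w))). }
  destruct Hgw as [gw Hgw].
  set (P := filter (fun p => good (fst p) (snd p)) (list_prod La Ltl)).
  assert (HP1 : (length La * (length Ltl - 2 * length Lt) <= length P)%nat)
    by (apply filter_prod_len; intros; apply Hper).
  assert (Hinc : incl P (map (fun p => (mul (gw (fst p)) (snd p),
                                        mul (inv (mul (gw (fst p)) (snd p))) (fst p)))
                             (list_prod Ls Lt))).
  { intros [a b] Hab. apply filter_In in Hab as [Hab Hg]. apply in_prod_iff in Hab as [Ha Hb].
    apply HLa' in Ha. apply HLtl' in Hb. simpl in Hg. unfold good in Hg.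
    destruct Rle_dec as [H1|H1]; [|discriminate].
    destruct Rle_dec as [H2|H2]; [|discriminate].
    assert (E1 : d x (act (inv a) x) = d x (act a x)).
    { rewrite (dist_inv mul inv e d act Hgrp Hact). apply M3. }
    assert (E2 : d (act (inv a) x) (act b x) = d x (act (mul a b) x)).
    { rewrite <- (A3 a). rewrite (act_inv1 mul inv e d act Hgrp Hact). rewrite A2. auto. }
    assert (E3 : d (act a x) (act (mul a b) x) = d x (act b x)).
    { rewrite A2. apply A3. }
    unfold gromov in H2. rewrite E1, E2 in H2.
    apply in_map_iff. exists (mul a b, mul (inv (gw (mul a b))) a). simpl.
    split.
    { rewrite (grp_cancel1 mul inv e Hgrp). rewrite (grp_cancel2 mul inv e Hgrp). reflexivity. }
    apply in_prod_iff. split.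
    - apply HLs'. pose proof (M4 x (act a x) (act (mul a b) x)). lra.
    - apply HLt'. rewrite A2, (dist_inv mul inv e d act Hgrp Hact).
      rewrite M3. 
      assert (Hy := Hgw (mul a b) (act a x) ltac:(lra) ltac:(lra)).
      unfold C0, eps0 in Hy. lra. }
  pose proof (NoDup_incl_length (NoDup_filter _ (NoDup_prod _ _ HLa HLtl)) Hinc) as HH.
  rewrite length_map, length_prod in HH.
  fold P in HH. destruct (le_lt_dec (2 * length Lt) (length Ltl)).
  - replace (length Ltl) with ((length Ltl - 2 * length Lt) + 2 * length Lt)%nat by lia. nia.
  - nia.
Qed.

Lemma H_nonneg {X G} (d : X -> X -> R) (mul : G -> G -> G) e (act : G -> X -> X) x H :
  IsMetric d -> IsometricAction mul e d act -> EntLe d act x H -> 0 <= H.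
Proof.
  intros Hm Ha Hent. destruct (Rle_lt_dec 0 H) as [ok|bad]; auto. exfalso.
  destruct (Hent (- H / 2) 0 ltac:(lra)) as [R0 [n [_ [HR [Hn Hln]]]]].
  pose proof (card_pos d mul e act Hm Ha x R0 n HR Hn) as H1.
  assert (0 <= ln (INR n)).
  { rewrite <- ln_1. apply ln_le'; [lra|]. apply (le_INR 1); auto. }
  assert (0 <= ln (INR n) / R0) by (apply Rmult_le_pos; [auto|left; apply Rinv_0_lt_compat; auto]).
  lra.
Qed.

Lemma growth {X G} (d : X -> X -> R) (mul : G -> G -> G) e (act : G -> X -> X) x H L beta :
  IsMetric d -> IsometricAction mul e d act -> ProperAction d act -> EntLe d act x H ->
  L > 0 -> beta > 1 ->
  (forall k n, HasCard (fun g => d x (act g x) < INR (S k) * L) n -> beta ^ k <= INR n) ->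
  ln beta <= H * L.
Proof.
  intros Hm Ha HP Hent HL Hb Hgr.
  destruct (Rle_lt_dec (ln beta) (H * L)) as [ok|bad]; auto. exfalso.
  pose proof (H_nonneg d mul e act x H Hm Ha Hent) as HH.
  set (gap := ln beta - H * L).
  assert (Hgap : gap > 0) by (unfold gap; lra).
  set (eps := gap / (3 * L)).
  assert (Heps : eps > 0) by (unfold eps; apply Rdiv_lt_0_compat; lra).
  assert (HepsL : eps * L = gap / 3) by (unfold eps; field; lra).
  set (M := 3 * (H + eps) * L / gap).
  assert (HM : M * gap = 3 * (H + eps) * L) by (unfold M; field; lra).
  assert (HM0 : 0 <= M).
  { unfold M. apply Rmult_le_pos; [|left; apply Rinv_0_lt_compat; lra].
    apply Rmult_le_pos; [|lra]. lra. }
  destruct (Hent eps ((M + 2) * L) Heps) as [R0 [n [HR0 [HR [Hn Hln]]]]].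
  set (y := R0 / L).
  assert (Hy : R0 = y * L) by (unfold y; field; lra).
  assert (Hy2 : y >= M + 2).
  { assert (HyL : y * L >= (M + 2) * L) by lra.
    destruct (Rlt_le_dec y (M + 2)); auto; [|lra].
    assert (y * L < (M + 2) * L) by (apply Rmult_lt_compat_r; lra). lra. }
  destruct (floor_ex (y - 1) ltac:(lra)) as [k [Hk1 Hk2]].
  destruct (ball_exists d act HP x (INR (S k) * L)) as [nk Hnk].
  pose proof (Hgr k nk Hnk) as Hbk.
  assert (Hkn : (nk <= n)%nat).
  { apply (card_le _ _ _ _ Hnk Hn). intros g Hg. rewrite S_INR in Hg.
    assert ((INR k + 1) * L <= y * L) by (apply Rmult_le_compat_r; lra). lra. }
  apply le_INR in Hkn.
  assert (Hpow : 0 < beta ^ k) by (apply pow_lt; lra).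
  assert (Hl1 : INR k * ln beta <= ln (INR n)).
  { rewrite <- ln_pow by lra. apply ln_le'; lra. }
  assert (Hl2 : ln (INR n) <= (H + eps) * R0).
  { apply (Rmult_le_compat_r R0) in Hln; [|lra].
    unfold Rdiv in Hln. rewrite Rmult_assoc, Rinv_l in Hln by lra. lra. }
  assert (HR1 : R0 <= (INR k + 2) * L).
  { rewrite Hy. apply Rmult_le_compat_r; lra. }
  assert (Hl3 : (H + eps) * R0 <= (H + eps) * ((INR k + 2) * L))
    by (apply Rmult_le_compat_l; lra).
  assert (HkM : INR k > M) by lra.
  assert (Hfin : INR k * ln beta <= INR k * (H * L) + INR k * (eps * L) + 2 * (H + eps) * L) by nra.
  assert (INR k * gap <= INR k * (gap / 3) + 2 * (H + eps) * L).
  { unfold gap at 1. rewrite HepsL in Hfin. lra. }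
  assert (INR k * gap > M * gap) by (apply Rmult_lt_compat_r; lra).
  nra.
Qed.

Lemma exp_le_mono a b : a <= b -> exp a <= exp b.
Proof. intros H. destruct (Rle_lt_or_eq_dec _ _ H) as [Hl|He]; [left; apply exp_increasing; auto|rewrite He; lra]. Qed.

Lemma shell {X G} (d : X -> X -> R) delta D H (mul : G -> G -> G) inv e (act : G -> X -> X) :
  Hyperbolic d delta -> IsGroup mul inv e -> IsometricAction mul e d act -> ProperAction d act ->
  QuotDiamLe d act D ->
  forall x, EntLe d act x H ->
  forall r t tl nt ntl, r > 0 -> 0 <= D -> 0 <= delta -> 10 * (D + 2 * delta) <= r -> r <= t ->
  tl = t + r / 4 ->
  HasCard (fun g => d x (act g x) < t) nt ->
  HasCard (fun g => d x (act g x) < tl) ntl ->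
  INR ntl <= 3 * exp (H * tl) * INR nt.
Proof.
  intros Hhyp Hgrp Hact HP HQ x Hent r t tl nt ntl Hr HD Hd Hrr Ht Etl Hnt Hntl.
  pose proof Hhyp as [Hm _].
  pose proof (H_nonneg d mul e act x H Hm Hact Hent) as HH.
  assert (Hexp : 1 <= exp (H * tl)).
  { pose proof (exp_ineq1_le (H * tl)). assert (0 <= H * tl) by (apply Rmult_le_pos; lra). lra. }
  pose proof (card_pos d mul e act Hm Hact x t nt ltac:(lra) Hnt) as Hnt1.
  apply le_INR in Hnt1. simpl in Hnt1.
  destruct (Rle_lt_dec (INR ntl) (3 * INR nt)) as [small|big].
  { nra. }
  set (beta := (INR ntl - 2 * INR nt) / INR nt).
  assert (Hbeta : beta * INR nt = INR ntl - 2 * INR nt) by (unfold beta; field; lra).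
  assert (Hb1 : beta > 1).
  { destruct (Rle_lt_dec beta 1); auto. nra. }
  assert (Hgr : forall k n, HasCard (fun g => d x (act g x) < INR (S k) * tl) n -> beta ^ k <= INR n).
  { induction k as [|k IH]; intros n Hn.
    - simpl. apply (le_INR 1). apply (card_pos d mul e act Hm Hact x (INR 1 * tl) n); auto.
      simpl. lra.
    - destruct (ball_exists d act HP x (INR (S k) * tl)) as [ns Hns].
      pose proof (IH ns Hns) as Hk.
      pose proof (recursion d delta D mul inv e act Hhyp Hgrp Hact HQ x r t Hr HD Hd Hrr Ht
                    (INR (S k) * tl) (INR (S (S k)) * tl) tl ns n nt ntl Etl
                    ltac:(rewrite (S_INR (S k)); lra) Hns Hn Hnt Hntl) as Hrec.
      apply le_INR in Hrec. rewrite !plus_INR, !mult_INR in Hrec. simpl in Hrec.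
      assert (INR ns * beta <= INR n).
      { apply (Rmult_le_reg_r (INR nt)); [lra|]. rewrite Rmult_assoc, Hbeta. nra. }
      simpl. pose proof (pos_INR ns). nra. }
  pose proof (growth d mul e act x H tl beta Hm Hact HP Hent ltac:(lra) Hb1 Hgr) as Hln.
  apply exp_le_mono in Hln. rewrite exp_ln in Hln by lra.
  nra.
Qed.

Theorem theorem5p1 (X G : Type) (d : X -> X -> R) (delta D H : R)
  (mul : G -> G -> G) (inv : G -> G) (e : G) (act : G -> X -> X) :
  Hyperbolic d delta ->
  IsGroup mul inv e ->
  IsometricAction mul e d act ->
  ProperAction d act ->
  QuotDiamLe d act D ->
  (forall x0, EntLe d act x0 H) ->
  forall (x : X) (r : R), r >= 10 * (D + 2 * delta) ->
  forall n1 n2 : nat,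
    HasCard (fun g => d x (act g x) < r) n1 ->
    HasCard (fun g => d x (act g x) < 2 * r) n2 ->
    INR n2 / INR n1 <= 3 ^ 4 * exp (13 / 2 * H * r).
Proof.
  intros Hhyp Hgrp Hact HP HQ Hent x r Hr n1 n2 Hn1 Hn2.
  pose proof Hhyp as [Hm [Hgeo [_ Hthin]]].
  pose proof Hm as [M1 [M2 [M3 M4]]].
  assert (HD : 0 <= D).
  { destruct (Rle_lt_dec 0 D) as [ok|bad]; auto.
    destruct (HQ x x (- D / 2) ltac:(lra)) as [g Hg]. pose proof (M1 x (act g x)). lra. }
  assert (Hd : 0 <= delta).
  { set (c := fun _ : R => x).
    assert (Hc : IsGeodesic d x x c).
    { unfold c; split; [auto|split; [auto|]]. intros s t Hs Ht.
      assert (d x x = 0) by (apply M2; auto). rewrite H0 in *.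
      replace (s - t) with 0 by lra. rewrite Rabs_R0; auto. }
    destruct (Hthin x x x c c c Hc Hc Hc) as [T1 _].
    assert (Hxx : d x x = 0) by (apply M2; auto).
    assert (Hg : gromov d x x x = 0) by (unfold gromov; rewrite Hxx; lra).
    specialize (T1 0 ltac:(lra)). unfold c in T1. lra. }
  assert (Hexp : 0 < exp (13 / 2 * H * r)) by apply exp_pos.
  destruct (Rle_lt_dec r 0) as [Hr0|Hr0].
  { destruct Hn2 as [l [_ [<- Hl]]]. destruct l as [|g l].
    - simpl. unfold Rdiv. rewrite Rmult_0_l. lra.
    - exfalso. assert (HH := proj1 (Hl g) (or_introl eq_refl)). pose proof (M1 x (act g x)). lra. }
  destruct (ball_exists d act HP x (5 * r / 4)) as [m1 Hm1].
  destruct (ball_exists d act HP x (3 * r / 2)) as [m2 Hm2].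
  destruct (ball_exists d act HP x (7 * r / 4)) as [m3 Hm3].
  assert (S1 := shell d delta D H mul inv e act Hhyp Hgrp Hact HP HQ x (Hent x) r r (5 * r / 4) n1 m1
                  Hr0 HD Hd ltac:(lra) ltac:(lra) ltac:(lra) Hn1 Hm1).
  assert (S2 := shell d delta D H mul inv e act Hhyp Hgrp Hact HP HQ x (Hent x) r (5 * r / 4) (3 * r / 2) m1 m2
                  Hr0 HD Hd ltac:(lra) ltac:(lra) ltac:(lra) Hm1 Hm2).
  assert (S3 := shell d delta D H mul inv e act Hhyp Hgrp Hact HP HQ x (Hent x) r (3 * r / 2) (7 * r / 4) m2 m3
                  Hr0 HD Hd ltac:(lra) ltac:(lra) ltac:(lra) Hm2 Hm3).
  assert (S4 := shell d delta D H mul inv e act Hhyp Hgrp Hact HP HQ x (Hent x) r (7 * r / 4) (2 * r) m3 n2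
                  Hr0 HD Hd ltac:(lra) ltac:(lra) ltac:(lra) Hm3 Hn2).
  pose proof (card_pos d mul e act Hm Hact x r n1 Hr0 Hn1) as Hn1p.
  apply le_INR in Hn1p. simpl in Hn1p.
  assert (Eexp : exp (13 / 2 * H * r) =
     exp (H * (5 * r / 4)) * exp (H * (3 * r / 2)) * exp (H * (7 * r / 4)) * exp (H * (2 * r))).
  { rewrite <- !exp_plus. f_equal. lra. }
  pose proof (exp_pos (H * (5 * r / 4))). pose proof (exp_pos (H * (3 * r / 2))).
  pose proof (exp_pos (H * (7 * r / 4))). pose proof (exp_pos (H * (2 * r))).
  pose proof (pos_INR m1). pose proof (pos_INR m2). pose proof (pos_INR m3).
  set (a1 := exp (H * (5 * r / 4))) in *. set (a2 := exp (H * (3 * r / 2))) in *.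
  set (a3 := exp (H * (7 * r / 4))) in *. set (a4 := exp (H * (2 * r))) in *.
  assert (C1 : INR m2 <= 9 * a1 * a2 * INR n1).
  { apply (Rle_trans _ _ _ S2). replace (9 * a1 * a2 * INR n1) with (3 * a2 * (3 * a1 * INR n1)) by ring.
    apply Rmult_le_compat_l; [lra|auto]. }
  assert (C2 : INR m3 <= 27 * a1 * a2 * a3 * INR n1).
  { apply (Rle_trans _ _ _ S3). replace (27 * a1 * a2 * a3 * INR n1) with (3 * a3 * (9 * a1 * a2 * INR n1)) by ring.
    apply Rmult_le_compat_l; [lra|auto]. }
  assert (C3 : INR n2 <= 81 * a1 * a2 * a3 * a4 * INR n1).
  { apply (Rle_trans _ _ _ S4). replace (81 * a1 * a2 * a3 * a4 * INR n1) with (3 * a4 * (27 * a1 * a2 * a3 * INR n1)) by ring.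
    apply Rmult_le_compat_l; [lra|auto]. }
  rewrite Eexp. apply (Rmult_le_reg_r (INR n1)); [lra|].
  unfold Rdiv. rewrite Rmult_assoc, Rinv_l by lra. lra.
Qed.
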